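(* The set $\{x\in V: 0\in\overline{A\cdot x}\}$ is a real algebraic subset of $V$; in particular it is closed.
   Context: Let $V$ be a finite-dimensional real vector space with a scalar product. Let $G\subset\mathrm{GL}(V)$ be a connected closed subgroup, closed under transpose, with Lie algebra $\mathfrak g$, $G=K\exp(\mathfrak p)$ with $K=G\cap\mathrm O(V)$, $\mathfrak p=\mathfrak g\cap\mathrm{Sym}(V)$. Let $\mathfrak a\subset\mathfrak p$ be an Abelian subalgebra and $A=\exp(\mathfrak a)$, acting linearly on $V$. *)

(* Defs.v *)
From mathcomp Require Import all_boot all_algebra all_classical all_reals all_analysis.
From mathcomp Require mpoly.
Import numFieldNormedType.Exports.
Set Implicit Arguments. Unset Strict Implicit. Unset Printing Implicit Defensive.
Local Open Scope classical_set_scope.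
Local Open Scope ring_scope.

Definition expmx (R : realType) (n : nat) (M : 'M[R]_n) : 'M[R]_n :=
  limn (fun N : nat => \sum_(j < N) (j`!%:R)^-1 *: M ^+ j).

(* The subspace a of End(V) = 'M_n spanned by the family B. *)
Definition span_family (R : realType) (n k : nat) (B : 'I_k -> 'M[R]_n)
  : set 'M[R]_n :=
  [set X | exists t : 'I_k -> R, X = \sum_(i < k) t i *: B i].

Definition expgroup (R : realType) (n k : nat) (B : 'I_k -> 'M[R]_n)
  : set 'M[R]_n := (@expmx R n) @` span_family B.

Definition orbit_of (R : realType) (n k : nat) (B : 'I_k -> 'M[R]_n)
  (x : 'cV[R]_n) : set 'cV[R]_n :=
  [set g *m x | g in expgroup B].

Definition unstable_set (R : realType) (n k : nat) (B : 'I_k -> 'M[R]_n)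
  : set 'cV[R]_n :=
  [set x | closure (orbit_of B x) 0].

Definition real_algebraic (R : realType) (n : nat) (S : set 'cV[R]_n) : Prop :=
  exists (m : nat) (P : 'I_m -> mpoly.mpoly n R),
    S = [set x | forall i : 'I_m, mpoly.meval (fun j => x j 0) (P i) = 0].

(* Main.v *)
Require Import Defs.
From mathcomp Require Import all_boot all_algebra all_classical all_reals all_analysis.
From mathcomp Require mpoly.
From mathcomp Require Import complex spectral mxred sesquilinear order.
Import numFieldNormedType.Exports.
Import GRing.Theory Num.Theory Order.TTheory.
Local Open Scope classical_set_scope.
Local Open Scope ring_scope.
Import (canonicals, coercions) mpoly.
Lemma sym_diagonalizable (R : realType) n (A : 'M[R]_n) :
  A^T = A -> diagonalizable A.
Proof.
case: n A => [|n] A Asym.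
  by exists 1%:M; rewrite ?unitmx1 // /similar_to; apply/is_diag_mxP => -[].
pose AC := map_mx (real_complex R) A.
have ACreal : AC \is a realmx.
  by apply/mxOverP => i j; rewrite mxE; apply/complex_realP; eexists.
have ACsym : AC \is symmetricmx.
  apply/is_hermitianmxP; rewrite expr0 scale1r.
  apply/matrixP => i j; rewrite !mxE.
  by rewrite -[in LHS]Asym mxE.

have ACherm := realsym_hermsym ACsym ACreal.
have dreal := hermitian_spectral_diag_real ACherm.
have /orthomx_spectralP ACE := hermitian_normalmx ACherm.
set P := spectralmx AC in ACE; set d := spectral_diag AC in ACE dreal.
have Pu : P \in unitmx by apply: spectral_unit.
apply/diagonalizableP.
exists (undup [seq complex.Re (d 0 i) | i <- enum 'I_n.+1]); first exact: undup_uniq.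
rewrite -(dvdp_map (real_complex R)) -mxminpoly_map -/AC.
rewrite map_prod_XsubC ACE -conjVmx // mxminpoly_uconj ?unitmx_inv //.
rewrite mxminpoly_diag.
rewrite -(big_map (real_complex R) xpredT (fun r => ('X - r%:P))).
rewrite -undup_map_inj; last exact: complexI.
have -> : [seq (real_complex R) i | i <- [seq complex.Re (d 0 i) | i <- enum 'I_n.+1]] = [seq d 0 i | i <- enum 'I_n.+1].
  rewrite -map_comp; apply: eq_map => i /=; apply: RRe_real; exact: (mxOverP dreal).
by [].
Qed.
Lemma mx_cvg_entries (R : realType) m n T (F : set_system T) (FF : Filter F)
  (u : T -> 'M[R]_(m, n)) (L : 'M[R]_(m, n)) :
  (forall i j, (fun t => u t i j) @ F --> L i j) -> u @ F --> L.
Proof.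
move=> H A /= [P PL sPA].
apply: (filterS (fun t Pt => sPA (u t) Pt)).
apply: filter_forall => i; apply: filter_forall => j.
exact: (H i j _ (PL i j)).
Qed.
Lemma diag_exp (R : comPzRingType) n (d : 'rV[R]_n) j :
  (diag_mx d) ^+ j = diag_mx (\row_a d 0 a ^+ j).
Proof.
elim: j => [|j IH].
  rewrite expr0; apply/matrixP => a b; rewrite !mxE expr0.
  by [].
rewrite exprS IH -mulmxE mul_diag_mx; apply/matrixP => a b; rewrite !mxE.
by case: eqP => [->|]; rewrite ?mulr1n ?exprS // !mulr0n mulr0.
Qed.

Lemma conj_exp (R : comUnitRingType) n (P D : 'M[R]_n) j : P \in unitmx ->
 (invmx P *m D *m P) ^+ j = invmx P *m D ^+ j *m P.
Proof.
move=> Pu; elim: j => [|j IH].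
  by rewrite !expr0 mulmx1 mulVmx.
have mE (A B : 'M[R]_n) : A * B = A *m B by [].
rewrite exprS IH !exprS !mE !mulmxA.
by rewrite -(mulmxA _ P) mulmxV // mulmx1.
Qed.

Lemma conj_diag_entry (R : comPzRingType) n (Q P : 'M[R]_n) (r : 'rV[R]_n) i k :
  (Q *m diag_mx r *m P) i k = \sum_a Q i a * r 0 a * P a k.
Proof. by rewrite mxE; apply: eq_bigr => a _; rewrite mul_mx_diag mxE. Qed.

Lemma expmx_conj (R : realType) n (P : 'M[R]_n) (d : 'rV[R]_n) :
  P \in unitmx ->
  exists e : 'rV[R]_n, expmx (invmx P *m diag_mx d *m P) = invmx P *m diag_mx e *m P.
Proof.
move=> Pu.
pose s a N := \sum_(j < N) (j`!%:R)^-1 * d 0 a ^+ j.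
have cs a : cvgn (s a).
  have -> : s a = series (exp_coeff (d 0 a)).
    apply/funext => N; rewrite /s /series /= big_mkord.
    by apply: eq_bigr => j _; rewrite /exp_coeff /= mulrC.
  exact: is_cvg_series_exp_coeff.
exists (\row_a limn (s a)).
have SE N : \sum_(j < N) (j`!%:R)^-1 *: (invmx P *m diag_mx d *m P) ^+ j
    = invmx P *m diag_mx (\row_a s a N) *m P.
  apply/matrixP => i k; rewrite summxE.
  under eq_bigr do rewrite conj_exp // diag_exp mxE conj_diag_entry big_distrr.
  rewrite conj_diag_entry exchange_big /=; apply: eq_bigr => a _.
  rewrite mxE /s big_distrr big_distrl /=; apply: eq_bigr => j _; rewrite mxE.
  by rewrite mulrA mulrCA !mulrA.
rewrite /expmx; apply: cvg_lim; first exact: norm_hausdorff.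
under eq_cvg do rewrite SE.
apply: mx_cvg_entries => i k.
under eq_cvg do rewrite conj_diag_entry.
rewrite conj_diag_entry.
apply: cvg_big => //; first exact: add_continuous.
move=> a _; rewrite mxE.
apply: cvgMr_tmp; apply: cvgMl_tmp.
under eq_cvg do rewrite mxE.
exact: cs.
Qed.
Section S.
Variables (R : realType) (n : nat).
Definition lin (c : 'I_n -> R) : mpoly.mpoly n R :=
  \sum_l c l *: mpoly.mpolyX R (mpoly.mnm1 l).
Lemma meval_lin (v : 'I_n -> R) c : mpoly.meval v (lin c) = \sum_l c l * v l.
Proof.
rewrite /lin raddf_sum /=; apply: eq_bigr => l _.
by rewrite mpoly.mevalZ mpoly.mevalXU.
Qed.
Lemma meval_prod (v : 'I_n -> R) (I : finType) (Pr : pred I) (F : I -> mpoly.mpoly n R) :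
  mpoly.meval v (\prod_(i | Pr i) F i) = \prod_(i | Pr i) mpoly.meval v (F i).
Proof. by rewrite rmorph_prod. Qed.
End S.

Lemma mulmx_cont (R : realType) n (T : 'M[R]_n) :
  continuous (fun y : 'cV[R]_n => T *m y).
Proof.
move=> y; apply: (@mx_cvg_entries _ _ _ _ (nbhs y) (@nbhs_filter _ y)) => i j.
rewrite mxE; under eq_cvg do rewrite mxE.
apply: cvg_big => //; first exact: add_continuous.
move=> l _; apply: cvgMl_tmp; exact: coord_continuous.
Qed.

Arguments mulmx_cont {R n} T.

Lemma closure_map (R : realType) n (f : 'cV[R]_n -> 'cV[R]_n)
  (A B : set 'cV[R]_n) p :
  continuous f -> (forall a, A a -> B (f a)) -> closure A p -> closure B (f p).
Proof.
move=> fc AB cl C nC.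
have [a [Aa Ca]] := cl _ (fc p C nC).
by exists (f a); split => //; apply: AB.
Qed.

Arguments closure_map {R n f A B p}.

Lemma codiag (R : realType) n k (B : 'I_k -> 'M[R]_n)
  (Bsym : forall i : 'I_k, (B i)^T = B i)
  (Bcomm : forall i j : 'I_k, B i *m B j = B j *m B i) :
  exists2 P : 'M[R]_n, P \in unitmx &
    forall g, expgroup B g -> exists e : 'rV[R]_n, g = invmx P *m diag_mx e *m P.
Proof.
have [P Pu Pall] : codiagonalizable [seq B i | i <- enum 'I_k].
  apply/codiagonalizableP; split.
    by move=> f g /mapP[i _ ->] /mapP[j _ ->]; exact: Bcomm.
  by move=> f /mapP[i _ ->]; exact: sym_diagonalizable.
exists P => // g [M [t ->] <-].
have hd i : is_diag_mx (P *m B i *m invmx P).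
  have := allP Pall (B i) (map_f _ (mem_enum _ i)).
  by rewrite /= /similar_to conjumx.
have : is_diag_mx (P *m (\sum_i t i *: B i) *m invmx P).
  apply/is_diag_mxP => a b ab.
  rewrite mulmx_sumr mulmx_suml summxE big1 // => i _.
  rewrite -scalemxAr -scalemxAl mxE.
  by move/is_diag_mxP: (hd i) => /(_ a b ab) ->; rewrite mulr0.
move=> /diag_mxP [d hdE].
have -> : \sum_i t i *: B i = invmx P *m diag_mx d *m P.
  by rewrite -hdE !mulmxA mulVmx // mul1mx -mulmxA mulVmx // mulmx1.
have [e ->] := @expmx_conj _ _ _ d Pu.
by exists e.
Qed.

Lemma conj_mul (R : comUnitRingType) n (P a b : 'M[R]_n) : P \in unitmx ->
  invmx P *m a *m P *m (invmx P *m b *m P) = invmx P *m (a *m b) *m P.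
Proof.
move=> Pu; rewrite !mulmxA; congr (_ *m P).
by rewrite -(mulmxA _ P) mulmxV // mulmx1.
Qed.

Theorem mainTheorem5 (R : realType) (n k : nat) (B : 'I_k -> 'M[R]_n)
  (Bsym : forall i : 'I_k, (B i)^T = B i)
  (Bcomm : forall i j : 'I_k, B i *m B j = B j *m B i) :
  real_algebraic (unstable_set B) /\ closed (unstable_set B).
Proof.
have [P Pu hg] := @codiag _ _ _ B Bsym Bcomm.
set U := unstable_set B.
have mono x x' : U x -> (forall j, (P *m x) j 0 = 0 -> (P *m x') j 0 = 0) -> U x'.
  move=> Ux hx.
  pose r : 'rV[R]_n := \row_j ((P *m x') j 0 / (P *m x) j 0).
  pose T := invmx P *m diag_mx r *m P.
  have Tx : T *m x = x'.
    rewrite /T -!mulmxA.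
    have -> : diag_mx r *m (P *m x) = P *m x'.
      apply/matrixP => j l; have -> : l = 0 by rewrite [l]ord1; apply/val_inj.
      rewrite mul_diag_mx mxE [r 0 j]mxE.
      have [h0|hn] := eqVneq ((P *m x) j 0) 0.
        by rewrite h0 mulr0 hx.
      by rewrite divfK.
    by rewrite mulKmx.
  have Tg g : expgroup B g -> T *m (g *m x) = g *m x'.
    move=> /hg [e ->]; rewrite -Tx mulmxA [in RHS]mulmxA; congr (_ *m x).
    by rewrite /T !conj_mul // diag_mxC.
  rewrite /U /unstable_set /= -(mulmx0 _ T).
  apply: (closure_map (mulmx_cont T) _ Ux).
  by move=> _ [g gB <-]; exists g => //; rewrite Tg.
have U0 : U 0.
  rewrite /U /unstable_set /=; apply: subset_closure.
  exists (expmx 0); last by rewrite mulmx0.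
  exists 0 => //; exists (fun=> 0); rewrite big1 // => i _; exact: scale0r.
pose supp (x : 'cV[R]_n) : {set 'I_n} := [set j | (P *m x) j 0 != 0]%SET.
pose Fs : {set {set 'I_n}} := [set S | `[< exists x0, U x0 /\ supp x0 = S >]]%SET.
have charU : U = [set x | exists S, S \in Fs /\ forall j, j \notin S -> (P *m x) j 0 = 0].
  apply/seteqP; split => x /=.
    move=> Ux; exists (supp x); split.
      by rewrite inE; apply/asboolP; exists x.
    by move=> j; rewrite inE negbK => /eqP.
  move=> [S [SF hS]]; move: SF; rewrite inE => /asboolP [x0 [Ux0 hx0]].
  apply: (mono x0) => // j hj; apply: hS; rewrite -hx0 inE hj eqxx //.
split; last first.
  rewrite charU.
  have -> : [set x : 'cV[R]_n | exists S, S \in Fs /\ forall j, j \notin S -> (P *m x) j 0 = 0] =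
    \bigcup_(S in [set S | S \in Fs]) [set x : 'cV[R]_n | forall j, j \notin S -> (P *m x) j 0 = 0].
    apply/seteqP; split => x /=.
      by move=> [S [SF h]]; exists S.
    by move=> [S SF h]; exists S.
  apply: closed_bigcup; first exact: finite_finset.
  move=> S _.
  pose D := diag_mx (\row_j ((j \notin S)%:R : R)) *m P.
  have -> : [set x : 'cV[R]_n | forall j, j \notin S -> (P *m x) j 0 = 0] =
      (fun x => D *m x) @^-1` [set 0].
    apply/seteqP; split => x /=.
      move=> h; apply/matrixP => j l.
      have -> : l = 0 by rewrite [l]ord1; apply/val_inj.
      rewrite /D -mulmxA mul_diag_mx mxE [_ 0 j]mxE [RHS]mxE.
      by case: (boolP (j \in S)) => js; rewrite ?mul0r //= h ?mulr0 ?js.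
    move=> h j js; have := congr1 (fun M : 'cV[R]_n => M j 0) h.
    by rewrite /D -mulmxA mul_diag_mx mxE [_ 0 j]mxE [RHS]mxE js mul1r.
  apply: preimage_closed.
    by move=> x _; exact: mulmx_cont.
  apply: accessible_closed_set1; apply: hausdorff_accessible; exact: norm_hausdorff.
pose ell (j : 'I_n) := @lin R n (fun l => P j l).
pose pol (f : {ffun {set 'I_n} -> 'I_n}) :=
  \prod_(S in Fs) (((f S \notin S)%:R : R) *: ell (f S)).
have mev f (x : 'cV[R]_n) : mpoly.meval (fun j => x j 0) (pol f) =
    \prod_(S in Fs) ((f S \notin S)%:R * (P *m x) (f S) 0).
  rewrite meval_prod; apply: eq_bigr => S _.
  by rewrite mpoly.mevalZ meval_lin [X in _ = _ * X]mxE.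
exists #|{ffun {set 'I_n} -> 'I_n}|, (fun i => pol (enum_val i)).
rewrite charU; apply/seteqP; split => x /=.
  move=> [S [SF hS]] i; rewrite mev (bigD1 S) //=; set f := enum_val i.
  case: (boolP (f S \in S)) => fS; first by rewrite /= mul0r mul0r.
  by rewrite hS // mulr0 mul0r.
move=> H; apply: contrapT => nex.
have hj S : S \in Fs -> exists j, j \notin S /\ (P *m x) j 0 != 0.
  move=> SF; apply: contrapT => nj; apply: nex; exists S; split => // j jS.
  apply/eqP; apply: contrapT => ne; apply: nj; exists j; split => //.
  exact/negP.
have S0F : supp 0 \in Fs by rewrite inE; apply/asboolP; exists 0.
have [j0 _] := hj _ S0F.
pose f : {ffun {set 'I_n} -> 'I_n} := [ffun S : {set 'I_n} => odflt j0 [pick j | (j \notin S) && ((P *m x) j 0 != 0)]].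
have := H (enum_rank f); rewrite mev enum_rankK; apply/eqP/prodf_neq0 => S SF.
rewrite ffunE; case: pickP => [j /andP[jS jn]|none] /=.
  by rewrite jS mul1r.
exfalso; have [j [jS jn]] := hj S SF.
by have := none j; rewrite jS jn.
Qed.
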